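(* Let $\mu$ be a cardinal with $\mu=\mu^{<\mu}$, let $\varepsilon<\mu$ be a limit ordinal, and let $P$ be a forcing notion satisfying $*^\varepsilon_\mu$. Then $P$ satisfies the $\mu^+$-chain condition.
   Context: A forcing notion is a quasi order $P$ with a minimal element $\emptyset_P$. Let $D$ be the filter on $\mu^+$ of sets $A$ such that for some club $E$ of $\mu^+$, every $i\in E$ of cofinality $\mu$ is in $A$; ''$\forall^D i$'' means ''for all $i$ in some member of $D$''. The game $*^\varepsilon_\mu[P]$ lasts $\varepsilon$ moves. In the $\zeta$-th move: Player I, if $\zeta\neq0$, chooses $\langle q^\zeta_i:i<\mu^+\rangle$ with $q^\zeta_i\in P$ such that for every $\xi<\zeta$, $(\forall^D i)\,p^\xi_i\le q^\zeta_i$, and chooses $f_\zeta:\mu^+\to\mu^+$ with $f_\zeta(i)<i$ for all $i$ in some club of $\mu^+$; if $\zeta=0$, $q^0_i=\emptyset_P$ for all $i$ and $f_0$ is identically $0$. Then Player II chooses $\langle p^\zeta_i:i<\mu^+\rangle$, $p^\zeta_i\in P$, with $(\forall^D i)\,q^\zeta_i\le p^\zeta_i$. Player I wins the play if (he always had a legal move and) there is $E\in D$ such that whenever $\mu<i<j<\mu^+$, $i,j\in E$, $\mathrm{cf}(i)=\mathrm{cf}(j)=\mu$ and $f_\xi(i)=f_\xi(j)$ for all $\xi<\varepsilon$, the set $\{p^\zeta_i:\zeta<\varepsilon\}\cup\{p^\zeta_j:\zeta<\varepsilon\}$ has an upper bound in $P$. $P$ satisfies $*^\varepsilon_\mu$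 if Player I has a winning strategy in $*^\varepsilon_\mu[P]$. The $\mu^+$-chain condition means every antichain of $P$ has cardinality at most $\mu$. *)

(* Defs.v *)
From Stdlib Require Import Relations Wellfounded.

Definition well_order {T : Type} (lt : T -> T -> Prop) : Prop :=
  well_founded lt /\ (forall x y z, lt x y -> lt y z -> lt x z) /\
  (forall x y, lt x y \/ x = y \/ lt y x).

Definition inj_on {A B : Type} (X : A -> Prop) (f : A -> B) : Prop :=
  forall x y, X x -> X y -> f x = f y -> x = y.

(* (M, ltM) is (the von Neumann ordinal of) a cardinal mu:
   no injection of M into a proper initial segment. *)
Definition is_cardinal {M : Type} (ltM : M -> M -> Prop) : Prop :=
  well_order ltM /\
  forall m, ~ exists g : M -> M, (forall x, ltM (g x) m) /\ inj_on (fun _ => True) g.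

(* mu^{<mu} = mu : the set  U_{alpha<mu} ^alpha mu  injects into mu
   (a sequence of length alpha is coded as a pair (alpha, g) with g only
   relevant below alpha). The inequality mu <= mu^{<mu} is trivial. *)
Definition mu_lt_mu_eq_mu {M : Type} (ltM : M -> M -> Prop) : Prop :=
  exists F : M -> (M -> M) -> M,
    forall a b g h, F a g = F b h -> a = b /\ forall x, ltM x a -> g x = h x.

(* (K, ltK) is the ordinal mu^+ : every proper initial segment has
   cardinality <= mu, and K itself does not. *)
Definition is_succ_card {M K : Type} (ltM : M -> M -> Prop) (ltK : K -> K -> Prop) : Prop :=
  well_order ltK /\
  (forall k, exists g : K -> M, inj_on (fun x => ltK x k) g) /\
  ~ (exists g : K -> M, inj_on (fun _ => True) g).

Definition is_limit {M : Type} (ltM : M -> M -> Prop) (eps : M) : Prop :=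
  (exists x, ltM x eps) /\ forall x, ltM x eps -> exists y, ltM x y /\ ltM y eps.

Section SetTheory.
Context {M K : Type} (ltM : M -> M -> Prop) (ltK : K -> K -> Prop).

Definition cofinal_in (i : K) (X : K -> Prop) : Prop :=
  (forall x, X x -> ltK x i) /\
  forall j, ltK j i -> exists x, X x /\ (j = x \/ ltK j x).

Definition cf_eq_mu (i : K) : Prop :=
  (exists X, cofinal_in i X /\
     exists f : K -> M, inj_on X f /\ forall m, exists x, X x /\ f x = m) /\
  forall X, cofinal_in i X ->
     exists g : M -> K, (forall m, X (g m)) /\ inj_on (fun _ => True) g.

Definition club (C : K -> Prop) : Prop :=
  (forall j, exists c, C c /\ ltK j c) /\
  (forall i, (exists j, ltK j i) ->
     (forall j, ltK j i -> exists c, C c /\ ltK j c /\ ltK c i) -> C i).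

Definition forallD (A : K -> Prop) : Prop :=
  exists C, club C /\ forall i, C i -> cf_eq_mu i -> A i.

(* mu < i, where mu is regarded as an ordinal below mu^+ *)
Definition mu_lt (i : K) : Prop :=
  exists k, ltK k i /\
    exists h : K -> M,
      (forall x y, ltK x k -> ltK y k -> (ltK x y <-> ltM (h x) (h y))) /\
      (forall m, exists x, ltK x k /\ h x = m).

Context {P : Type} (leP : P -> P -> Prop) (e : P) (eps : M).

(* A strategy for player I: at move zeta, given II's moves
   (p : M -> K -> P, of which only p xi for xi < zeta may be used),
   it returns (q^zeta, f_zeta). *)
Definition strategyI := M -> (M -> K -> P) -> (K -> P) * (K -> K).

Definition nonanticipating (s : strategyI) : Prop :=
  forall z h h', (forall x, ltM x z -> forall i, h x i = h' x i) ->
    forall i, fst (s z h) i = fst (s z h') i /\ snd (s z h) i = snd (s z h') i.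

Definition I_legal (s : strategyI) (p : M -> K -> P) (z : M) : Prop :=
  ((forall x, ~ ltM x z) ->
      forall i, fst (s z p) i = e /\ forall k, ~ ltK k (snd (s z p) i)) /\
  ((exists x, ltM x z) ->
      (forall x, ltM x z -> forallD (fun i => leP (p x i) (fst (s z p) i))) /\
      exists C, club C /\ forall i, C i -> ltK (snd (s z p) i) i).

Definition II_legal (s : strategyI) (p : M -> K -> P) : Prop :=
  forall z, ltM z eps -> forallD (fun i => leP (fst (s z p) i) (p z i)).

Definition I_wins_play (s : strategyI) (p : M -> K -> P) : Prop :=
  exists E : K -> Prop, forallD E /\
    forall i j, E i -> E j -> mu_lt i -> ltK i j -> cf_eq_mu i -> cf_eq_mu j ->
      (forall x, ltM x eps -> snd (s x p) i = snd (s x p) j) ->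
      exists r, forall z, ltM z eps -> leP (p z i) r /\ leP (p z j) r.

Definition winning_strategyI (s : strategyI) : Prop :=
  nonanticipating s /\
  forall p, II_legal s p ->
    (forall z, ltM z eps -> I_legal s p z) /\ I_wins_play s p.

Definition satisfies_star : Prop := exists s, winning_strategyI s.

End SetTheory.

Definition forcing_notion {P : Type} (leP : P -> P -> Prop) (e : P) : Prop :=
  (forall p, leP p p) /\ (forall p q r, leP p q -> leP q r -> leP p r) /\
  (forall p, leP e p).

Definition chain_condition {M P : Type} (leP : P -> P -> Prop) : Prop :=
  forall A : P -> Prop,
    (forall a b, A a -> A b -> a <> b -> ~ exists r, leP a r /\ leP b r) ->
    exists g : P -> M, inj_on A g.

(* Main.v *)
Require Import Defs.
From Stdlib Require Import Classical ClassicalEpsilon FunctionalExtensionality.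

Section WO.
Context {T : Type} (lt : T -> T -> Prop) (Hwo : well_order lt).

Lemma wo_irrefl x : ~ lt x x.
Proof.
  destruct Hwo as [wf _]. induction (wf x) as [x _ IH]. intro H. exact (IH x H H).
Qed.

Lemma wo_trans x y z : lt x y -> lt y z -> lt x z.
Proof. destruct Hwo as [_ [t _]]. apply t. Qed.

Lemma wo_tri x y : lt x y \/ x = y \/ lt y x.
Proof. destruct Hwo as [_ [_ t]]. apply t. Qed.

Lemma wo_asym x y : lt x y -> ~ lt y x.
Proof. intros H1 H2. exact (wo_irrefl x (wo_trans _ _ _ H1 H2)). Qed.

Lemma wo_least (Q : T -> Prop) x0 : Q x0 -> exists x, Q x /\ forall y, Q y -> ~ lt y x.
Proof.
  destruct Hwo as [wf _]. intros Hx0. induction (wf x0) as [x _ IH].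
  destruct (classic (exists y, Q y /\ lt y x)) as [[y [Qy Ly]]|N].
  - exact (IH y Ly Qy).
  - exists x. split; [exact Hx0|]. intros y Qy Ly. apply N. eauto.
Qed.

Lemma wo_not_lt x y : ~ lt x y -> y = x \/ lt y x.
Proof. intros N. destruct (wo_tri x y) as [H|[H|H]]; [contradiction|left; congruence|right; exact H]. Qed.

Lemma wo_le_lt x y z : (x = y \/ lt x y) -> lt y z -> lt x z.
Proof. intros [<-|H] H2; [exact H2| exact (wo_trans _ _ _ H H2)]. Qed.

Lemma wo_lt_le x y z : lt x y -> (y = z \/ lt y z) -> lt x z.
Proof. intros H [<-|H2]; [exact H| exact (wo_trans _ _ _ H H2)]. Qed.

Lemma wo_max2 a b : exists c, (a = c \/ lt a c) /\ (b = c \/ lt b c).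
Proof.
  destruct (wo_tri a b) as [H|[H|H]].
  - exists b; auto.
  - exists b; auto.
  - exists a; auto.
Qed.

Lemma wf_rec_choice {B : Type} (b0 : B) (Q : T -> (T -> B) -> B -> Prop) :
  (forall x h h', (forall y, lt y x -> h y = h' y) -> forall b, Q x h b -> Q x h' b) ->
  (forall x h, (forall y, lt y x -> Q y h (h y)) -> exists b, Q x h b) ->
  exists f : T -> B, forall x, Q x f (f x).
Proof.
  intros Hc Hex. destruct Hwo as [wf _].
  set (ext := fun x (rec : forall y, lt y x -> B) (y : T) =>
          match excluded_middle_informative (lt y x) with
          | left H => rec y H | right _ => b0 end).
  set (Fn := fun x (rec : forall y, lt y x -> B) =>
         match excluded_middle_informative (exists b, Q x (ext x rec) b) with
         | left H => proj1_sig (constructive_indefinite_description _ H)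
         | right _ => b0 end).
  set (f := Fix wf (fun _ => B) Fn).
  assert (Feq : forall x, f x = Fn x (fun y _ => f y)).
  { intro x. unfold f. refine (Fix_eq wf (fun _ => B) Fn _ x). intros x0 g g' E.
    assert (g = g') as ->; [|reflexivity].
    apply functional_extensionality_dep; intro y.
    apply functional_extensionality_dep; intro p. apply E. }
  exists f. intro x. induction (wf x) as [x _ IH].
  assert (Hext : forall y, lt y x -> ext x (fun y _ => f y) y = f y).
  { intros y Hy. unfold ext. destruct (excluded_middle_informative (lt y x)); [reflexivity|contradiction]. }
  assert (E1 : exists b, Q x (ext x (fun y _ => f y)) b).
  { destruct (Hex x f IH) as [b Hb]. exists b. apply (Hc x f); [|exact Hb].
    intros y Hy. symmetry. apply Hext. exact Hy. }
  rewrite Feq. unfold Fn at 1.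
  destruct (excluded_middle_informative _) as [H|H]; [|contradiction].
  destruct (constructive_indefinite_description _ H) as [b Hb]. simpl.
  apply (Hc x (ext x (fun y _ => f y))); [exact Hext|exact Hb].
Qed.

End WO.

Section MLem.
Context {M : Type} (ltM : M -> M -> Prop) (HM : is_cardinal ltM)
  (HF : mu_lt_mu_eq_mu ltM) (eps : M) (Heps : is_limit ltM eps).

Let Hwo : well_order ltM := proj1 HM.

Lemma M_noinj m (g : M -> M) : (forall x, ltM (g x) m) -> ~ inj_on (fun _ => True) g.
Proof. intros H1 H2. apply (proj2 HM m). exists g. auto. Qed.

Lemma M_two : exists x0 y, ltM x0 y /\ ltM y eps.
Proof.
  destruct Heps as [[x Hx] H]. destruct (H x Hx) as [y [H1 H2]]. eauto.
Qed.

Lemma M_pair : exists pr : M -> M -> M, forall u v u' v', pr u v = pr u' v' -> u = u' /\ v = v'.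
Proof.
  destruct HF as [F HF']. destruct M_two as [x0 [y [H1 H2]]].
  assert (x0eps : ltM x0 eps) by exact (wo_trans _ Hwo _ _ _ H1 H2).
  assert (Hne : x0 <> y) by (intro E; subst; exact (wo_irrefl _ Hwo _ H1)).
  exists (fun u v => F eps (fun t => if excluded_middle_informative (t = x0) then u else v)).
  intros u v u' v' E. destruct (HF' _ _ _ _ E) as [_ Hag]. split.
  - specialize (Hag x0 x0eps). simpl in Hag.
    destruct (excluded_middle_informative (x0 = x0)); [exact Hag|congruence].
  - specialize (Hag y H2). simpl in Hag.
    destruct (excluded_middle_informative (y = x0)); [congruence|exact Hag].
Qed.

Lemma M_nomax m : exists n, ltM m n.
Proof.
  destruct (classic (exists n, ltM m n)) as [H|H]; [exact H|exfalso].
  assert (Hmax : forall x, x <> m -> ltM x m).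
  { intros x Hx. destruct (wo_tri _ Hwo x m) as [A|[A|A]]; [exact A|congruence|].
    exfalso. eauto. }
  destruct HF as [F HF']. destruct M_two as [x0 [y [H1 H2]]].
  assert (x0eps : ltM x0 eps) by exact (wo_trans _ Hwo _ _ _ H1 H2).
  assert (Hne : y <> eps) by (intro E; subst; exact (wo_irrefl _ Hwo _ H2)).
  assert (inj : forall a, ltM x0 a -> inj_on (fun _ => True) (fun x => F a (fun _ => x))).
  { intros a Ha u v _ _ E. destruct (HF' _ _ _ _ E) as [_ Hag]. exact (Hag x0 Ha). }
  destruct (classic (exists u, F y (fun _ => u) = m)) as [[u Hu]|N].
  - apply (M_noinj m (fun x => F eps (fun _ => x))).
    + intro x. apply Hmax. intro E. rewrite <- Hu in E.
      destruct (HF' _ _ _ _ E) as [E' _]. congruence.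
    + apply inj. exact x0eps.
  - apply (M_noinj m (fun x => F y (fun _ => x))).
    + intro x. apply Hmax. intro E. apply N. eauto.
    + apply inj. exact H1.
Qed.

Lemma M_reg a (k : M -> M) : exists n, forall x, ltM x a -> ~ ltM n (k x).
Proof.
  apply NNPP. intro N.
  assert (H : forall n, exists x, ltM x a /\ ltM n (k x)).
  { intro n. apply NNPP. intro N2. apply N. exists n. intros x Hx L. apply N2. eauto. }
  destruct HF as [F HF'].
  set (Tx := fun x m => exists g, ltM (F a g) (k x) /\ g x = m).
  assert (Hd : forall x, exists m, ltM x a -> ~ Tx x m).
  { intro x. apply NNPP. intro N2.
    assert (All : forall m, ltM x a /\ Tx x m).
    { intro m. apply NNPP. intro N3. apply N2. exists m. intros Hx T. apply N3. auto. }
    destruct (All x) as [Hx _].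
    assert (Hg : forall m, exists g, ltM (F a g) (k x) /\ g x = m) by (intro m; exact (proj2 (All m))).
    destruct (choice _ Hg) as [G HG].
    apply (M_noinj (k x) (fun m => F a (G m))).
    - intro m. exact (proj1 (HG m)).
    - intros u v _ _ E. destruct (HF' _ _ _ _ E) as [_ Hag]. specialize (Hag x Hx).
      rewrite (proj2 (HG u)), (proj2 (HG v)) in Hag. exact Hag. }
  destruct (choice _ Hd) as [h Hh].
  destruct (H (F a h)) as [x [Hx Lx]].
  apply (Hh x Hx). exists h. auto.
Qed.

End MLem.

Section KLem.
Context {M K : Type} (ltM : M -> M -> Prop) (ltK : K -> K -> Prop) (HM : is_cardinal ltM)
  (HF : mu_lt_mu_eq_mu ltM) (eps : M) (Heps : is_limit ltM eps) (HK : is_succ_card ltM ltK).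

Let HwoM : well_order ltM := proj1 HM.
Let HwoK : well_order ltK := proj1 HK.

Lemma K_noinj (g : K -> M) : ~ inj_on (fun _ => True) g.
Proof. intro H. apply (proj2 (proj2 HK)). eauto. Qed.

Lemma K_inh : exists k : K, True.
Proof.
  apply NNPP. intro N. apply (K_noinj (fun _ => eps)). intros x. exfalso. eauto.
Qed.

Lemma K_nomax j : exists k, ltK j k.
Proof.
  apply NNPP. intro N.
  assert (Hmax : forall x, x <> j -> ltK x j).
  { intros x Hx. destruct (wo_tri _ HwoK x j) as [A|[A|A]]; [exact A|congruence|].
    exfalso. eauto. }
  destruct (M_pair ltM HM HF eps Heps) as [pr Hpr].
  destruct (M_two ltM eps Heps) as [x0 [y [H1 _]]].
  assert (Hne : x0 <> y) by (intro E; subst; exact (wo_irrefl _ HwoM _ H1)).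
  destruct (proj1 (proj2 HK) j) as [g Hg].
  apply (K_noinj (fun x => if excluded_middle_informative (x = j) then pr x0 x0 else pr y (g x))).
  intros u v _ _. 
  destruct (excluded_middle_informative (u = j)) as [Eu|Eu];
  destruct (excluded_middle_informative (v = j)) as [Ev|Ev]; intro E.
  - congruence.
  - apply Hpr in E. destruct E; congruence.
  - apply Hpr in E. destruct E; congruence.
  - apply Hpr in E. apply Hg; auto. exact (proj2 E).
Qed.

Lemma BND_fun (b : M -> K) : exists k, forall m, ltK (b m) k.
Proof.
  apply NNPP. intro N.
  assert (H : forall k, exists m, ltK k (b m)).
  { intro k. destruct (K_nomax k) as [k' Hk']. apply NNPP. intro N2. apply N. exists k'.
    intro m. destruct (wo_tri _ HwoK (b m) k') as [A|[A|A]]; [exact A| |]; exfalso; apply N2; exists m.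
    - subst. exact Hk'.
    - exact (wo_trans _ HwoK _ _ _ Hk' A). }
  destruct (choice _ H) as [mk Hmk].
  destruct (choice _ (fun m => proj1 (proj2 HK) (b m))) as [G HG].
  destruct (M_pair ltM HM HF eps Heps) as [pr Hpr].
  apply (K_noinj (fun k => pr (mk k) (G (mk k) k))).
  intros u v _ _ E. apply Hpr in E. destruct E as [E1 E2].
  rewrite <- E1 in E2. apply (HG (mk u)); auto. rewrite E1. auto.
Qed.

Lemma BND_map (X : K -> Prop) (g : K -> M) : inj_on X g ->
  forall b : K -> K, exists k', forall x, X x -> ltK (b x) k'.
Proof.
  intros Hg b. destruct K_inh as [k0 _].
  set (c := fun m => match excluded_middle_informative (exists x, X x /\ g x = m) with
          | left H => b (proj1_sig (constructive_indefinite_description _ H))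
          | right _ => k0 end).
  destruct (BND_fun c) as [k Hk]. exists k. intros x Hx.
  specialize (Hk (g x)). unfold c in Hk.
  destruct (excluded_middle_informative _) as [H|H]; [|exfalso; eauto].
  destruct (constructive_indefinite_description _ H) as [x' [Hx' E]]. simpl in Hk.
  rewrite (Hg x' x Hx' Hx E) in Hk. exact Hk.
Qed.

Lemma BND_seg (k : K) (b : K -> K) : exists k', forall x, ltK x k -> ltK (b x) k'.
Proof.
  destruct (proj1 (proj2 HK) k) as [g Hg]. exact (BND_map _ g Hg b).
Qed.

End KLem.

Section Iota.
Context {M K : Type} (ltM : M -> M -> Prop) (ltK : K -> K -> Prop) (HM : is_cardinal ltM)
  (HF : mu_lt_mu_eq_mu ltM) (eps : M) (Heps : is_limit ltM eps) (HK : is_succ_card ltM ltK).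

Let HwoM : well_order ltM := proj1 HM.
Let HwoK : well_order ltK := proj1 HK.

Lemma exists_kmu : exists kmu, forall i, ltK kmu i -> mu_lt ltM ltK i.
Proof.
  destruct (K_inh ltM ltK eps HK) as [k0 _].
  set (Q := fun (m : M) (h : M -> K) (b : K) =>
     (forall m', ltM m' m -> ltK (h m') b) /\
     (forall b', (forall m', ltM m' m -> ltK (h m') b') -> ~ ltK b' b)).
  destruct (wf_rec_choice ltM HwoM k0 Q) as [io Hio].
  { intros x h h' E b [A B]. split.
    - intros m' Hm'. rewrite <- E by exact Hm'. auto.
    - intros b' Hb'. apply B. intros m' Hm'. rewrite E by exact Hm'. auto. }
  { intros x h _. destruct (BND_fun ltM ltK HM HF eps Heps HK h) as [k Hk].
    destruct (wo_least _ HwoK (fun b => forall m', ltM m' x -> ltK (h m') b) k) as [b [Hb1 Hb2]].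
    { intros; auto. }
    exists b. split; auto. }
  assert (mono : forall a b, ltM a b -> ltK (io a) (io b)).
  { intros a b H. exact (proj1 (Hio b) a H). }
  assert (down : forall m y, (y = io m \/ ltK y (io m)) -> exists n, y = io n).
  { intro m. induction (proj1 HwoM m) as [m _ IH]. intros y [E|L]; [eauto|].
    apply NNPP. intro N.
    apply (proj2 (Hio m) y); [|exact L].
    intros m' Hm'. apply NNPP. intro N2.
    destruct (wo_not_lt _ HwoK _ _ N2) as [E|L2]; apply N; apply (IH m' Hm'); auto. }
  destruct (BND_fun ltM ltK HM HF eps Heps HK io) as [k Hk].
  destruct (wo_least _ HwoK (fun b => forall m, ltK (io m) b) k Hk) as [kmu [Hk1 Hk2]].
  assert (range : forall y, ltK y kmu -> exists n, y = io n).
  { intros y Hy. apply NNPP. intro N. apply (Hk2 y); [|exact Hy].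
    intro m. apply NNPP. intro N2. apply N.
    destruct (wo_not_lt _ HwoK _ _ N2) as [E|L2]; apply (down m); auto. }
  assert (inj : forall a b, io a = io b -> a = b).
  { intros a b E. destruct (wo_tri _ HwoM a b) as [A|[A|A]]; [|exact A|];
    apply mono in A; rewrite E in A; exfalso; exact (wo_irrefl _ HwoK _ A). }
  set (hmu := fun y => match excluded_middle_informative (exists n, y = io n) with
        | left H => proj1_sig (constructive_indefinite_description _ H) | right _ => eps end).
  assert (hio : forall n, hmu (io n) = n).
  { intro n. unfold hmu. destruct (excluded_middle_informative _) as [H|H]; [|exfalso; eauto].
    destruct (constructive_indefinite_description _ H) as [n' E]. simpl. symmetry. apply inj. exact E. }
  exists kmu. intros i Hi. exists kmu. split; [exact Hi|]. exists hmu. split.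
  - intros x y Hx Hy. destruct (range x Hx) as [a ->]. destruct (range y Hy) as [b ->].
    rewrite !hio. split; [|apply mono].
    intro L. destruct (wo_tri _ HwoM a b) as [A|[A|A]]; [exact A| |]; exfalso.
    + subst. exact (wo_irrefl _ HwoK _ L).
    + exact (wo_asym _ HwoK _ _ L (mono _ _ A)).
  - intro m. exists (io m). split; [apply Hk1|apply hio].
Qed.

End Iota.

Section Core.
Context {M K : Type} (ltM : M -> M -> Prop) (ltK : K -> K -> Prop) (HM : is_cardinal ltM)
  (HF : mu_lt_mu_eq_mu ltM) (eps : M) (Heps : is_limit ltM eps) (HK : is_succ_card ltM ltK).

Let HwoM : well_order ltM := proj1 HM.
Let HwoK : well_order ltK := proj1 HK.

Lemma ubK a b : exists c, ltK a c /\ ltK b c.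
Proof.
  destruct (wo_max2 _ HwoK a b) as [c [A B]].
  destruct (K_nomax ltM ltK HM HF eps Heps HK c) as [d Hd].
  exists d. split; eapply (wo_le_lt _ HwoK); eauto.
Qed.

Lemma ubM a b : exists c, ltM a c /\ ltM b c.
Proof.
  destruct (wo_max2 _ HwoM a b) as [c [A B]].
  destruct (M_nomax ltM HM HF eps Heps c) as [d Hd].
  exists d. split; eapply (wo_le_lt _ HwoM); eauto.
Qed.

Lemma gamma_exists (CE : K -> Prop) (Cl : M -> K -> Prop) (f : M -> K -> K) :
  (forall x, ltM x eps -> forall i, Cl x i -> (exists k, ltK k i) -> ltK (f x i) i) ->
  forall i, mu_lt ltM ltK i -> @cf_eq_mu M K ltK i -> (forall x, ltM x eps -> Cl x i) ->
  exists g, ltK g i /\ forall x, ltM x eps -> ltK (f x i) g.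
Proof.
  intros Hreg i Hmu Hcf HCl.
  assert (Hbelow : exists k, ltK k i) by (destruct Hmu as [k [Hk _]]; eauto).
  set (X := fun y => exists x, ltM x eps /\ y = f x i).
  assert (X1 : forall y, X y -> ltK y i).
  { intros y [x [Hx ->]]. apply Hreg; auto. }
  destruct (classic (cofinal_in ltK i X)) as [C|C].
  - exfalso. destruct (proj2 Hcf X C) as [g [Hg1 Hg2]].
    assert (Hx : forall m, exists x, ltM x eps /\ g m = f x i) by exact Hg1.
    destruct (choice _ Hx) as [xm Hxm].
    apply (M_noinj ltM HM eps xm).
    + intro m. exact (proj1 (Hxm m)).
    + intros u v _ _ E. apply Hg2; auto. rewrite (proj2 (Hxm u)), (proj2 (Hxm v)), E. reflexivity.
  - apply NNPP. intro N. apply C. split; [exact X1|].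
    intros j Hj. apply NNPP. intro N2. apply N. exists j. split; [exact Hj|].
    intros x Hx. destruct (wo_tri _ HwoK (f x i) j) as [A|[A|A]]; [exact A| |];
      exfalso; apply N2; exists (f x i); split; [exists x; auto| |exists x; auto|]; auto.
Qed.

Lemma core (CE : K -> Prop) (Cl : M -> K -> Prop) (f : M -> K -> K) :
  club ltK CE ->
  (forall x, ltM x eps -> club ltK (Cl x) /\
     forall i, Cl x i -> (exists k, ltK k i) -> ltK (f x i) i) ->
  exists i j, CE i /\ CE j /\ mu_lt ltM ltK i /\ ltK i j /\
    @cf_eq_mu M K ltK i /\ @cf_eq_mu M K ltK j /\ forall x, ltM x eps -> f x i = f x j.
Proof.
  intros HCE HCl.
  destruct (K_inh ltM ltK eps HK) as [k0 _].
  set (S := fun i => mu_lt ltM ltK i /\ @cf_eq_mu M K ltK i /\ CE i /\ forall x, ltM x eps -> Cl x i).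
  apply NNPP. intro N.
  assert (NC : forall i j, S i -> S j -> ltK i j -> exists x, ltM x eps /\ f x i <> f x j).
  { intros i j [Si1 [Si2 [Si3 Si4]]] [Sj1 [Sj2 [Sj3 Sj4]]] L.
    apply NNPP. intro N2. apply N. exists i, j. refine (conj Si3 (conj Sj3 (conj Si1 (conj L (conj Si2 (conj Sj2 _)))))).

    intros x Hx. apply NNPP. intro N3. apply N2. eauto. }
  assert (Hg : forall i, exists g, S i -> ltK g i /\ forall x, ltM x eps -> ltK (f x i) g).
  { intro i. destruct (classic (S i)) as [Si|Si]; [|exists k0; tauto].
    destruct Si as [A [B [_ D]]].
    destruct (gamma_exists CE Cl f (fun x Hx => proj2 (HCl x Hx)) i A B D) as [g Hg].
    exists g; auto. }
  destruct (choice _ Hg) as [gam Hgam].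
  destruct (choice _ (fun k => proj1 (proj2 HK) k)) as [G HG].
  destruct HF as [F HF'].
  assert (Hb : forall g, exists k', forall i, S i -> gam i = g -> ltK i k').
  { intro g.
    destruct (BND_map ltM ltK HM HF eps Heps HK (fun i => S i /\ gam i = g)
                (fun i => F eps (fun x => G g (f x i)))) with (b := fun i : K => i) as [k' Hk'].
    - intros i j [Si Ei] [Sj Ej] E. destruct (HF' _ _ _ _ E) as [_ Hag].
      assert (Eq : forall x, ltM x eps -> f x i = f x j).
      { intros x Hx. apply (HG g); [| |exact (Hag x Hx)].
        + rewrite <- Ei. apply (proj2 (Hgam i Si)). exact Hx.
        + rewrite <- Ej. apply (proj2 (Hgam j Sj)). exact Hx. }
      destruct (wo_tri _ HwoK i j) as [A|[A|A]]; [|exact A|]; exfalso.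
      + destruct (NC i j Si Sj A) as [x [Hx D]]. apply D. auto.
      + destruct (NC j i Sj Si A) as [x [Hx D]]. apply D. symmetry. auto.
    - exists k'. intros i Si Ei. apply Hk'. auto. }
  destruct (choice _ Hb) as [beta Hbeta].
  assert (HcE : forall k, exists c, CE c /\ ltK k c) by (intro k; apply (proj1 HCE)).
  destruct (choice _ HcE) as [cE HcE'].
  assert (Hcl : forall x k, exists c, ltM x eps -> Cl x c /\ ltK k c).
  { intros x k. destruct (classic (ltM x eps)) as [Hx|Hx]; [|exists k0; tauto].
    destruct (proj1 (proj1 (HCl x Hx)) k) as [c Hc]. exists c; auto. }
  assert (Hcl' : forall x, exists c : K -> K, forall k, ltM x eps -> Cl x (c k) /\ ltK k (c k)).
  { intro x. apply (choice _ (Hcl x)). }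
  destruct (choice _ Hcl') as [cl Hcl''].
  assert (HN : forall k, exists n, ltK k n /\ ltK (cE k) n /\ (forall x, ltM x eps -> ltK (cl x k) n)
                 /\ (forall g, ltK g k -> ltK (beta g) n)).
  { intro k.
    destruct (BND_fun ltM ltK HM HF eps Heps HK (fun x => cl x k)) as [k1 Hk1].
    destruct (BND_seg ltM ltK HM HF eps Heps HK k beta) as [k2 Hk2].
    destruct (ubK k (cE k)) as [a [Ha1 Ha2]].
    destruct (ubK k1 k2) as [b [Hb1 Hb2]].
    destruct (ubK a b) as [n [Hn1 Hn2]].
    exists n. repeat split.
    - eapply (wo_trans _ HwoK); eauto.
    - eapply (wo_trans _ HwoK); eauto.
    - intros x _. eapply (wo_trans _ HwoK); [apply Hk1|]. eapply (wo_trans _ HwoK); eauto.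
    - intros g Hg'. eapply (wo_trans _ HwoK); [apply Hk2; exact Hg'|]. eapply (wo_trans _ HwoK); eauto. }
  destruct (choice _ HN) as [Next HNext].
  destruct (exists_kmu ltM ltK HM HF eps Heps HK) as [kmu Hkmu].
  destruct (wf_rec_choice ltM HwoM k0
     (fun m h b => ltK kmu b /\ forall m', ltM m' m -> ltK (Next (h m')) b)) as [d Hd].
  { intros x h h' E b [A B]. split; auto. intros m' Hm'. rewrite <- E by exact Hm'. auto. }
  { intros x h _. destruct (BND_fun ltM ltK HM HF eps Heps HK (fun m' => Next (h m'))) as [k Hk].
    destruct (ubK k kmu) as [b [Hb1 Hb2]]. exists b. split; auto.
    intros m' _. eapply (wo_trans _ HwoK); eauto. }
  assert (dmono : forall a b, ltM a b -> ltK (d a) (d b)).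
  { intros a b H. eapply (wo_trans _ HwoK); [apply (proj1 (HNext (d a)))|]. apply (proj2 (Hd b)). exact H. }
  assert (dle : forall a b, (a = b \/ ltM a b) -> (d a = d b \/ ltK (d a) (d b))).
  { intros a b [->|H]; auto. }
  destruct (BND_fun ltM ltK HM HF eps Heps HK d) as [k Hk].
  destruct (wo_least _ HwoK (fun b => forall m, ltK (d m) b) k Hk) as [ds [Hds1 Hds2]].
  assert (lsub : forall j, ltK j ds -> exists m, j = d m \/ ltK j (d m)).
  { intros j Hj. apply NNPP. intro N2. apply (Hds2 j); [|exact Hj].
    intro m. destruct (wo_tri _ HwoK (d m) j) as [A|[A|A]]; [exact A| |]; exfalso; apply N2; eauto. }
  assert (clos : forall C (c : K -> K), (forall k, C (c k) /\ ltK k (c k) /\ ltK (c k) (Next k)) ->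
            club ltK C -> C ds).
  { intros C c Hc HC. apply (proj2 HC). { exists (d eps). apply Hds1. }
    intros j Hj. destruct (lsub j Hj) as [m Hm].
    destruct (M_nomax ltM HM HF eps Heps m) as [m1 Hm1].
    destruct (Hc (d m)) as [A [B D]].
    exists (c (d m)). split; [exact A|]. split.
    - eapply (wo_le_lt _ HwoK); eauto.
    - eapply (wo_trans _ HwoK); [exact D|]. eapply (wo_trans _ HwoK); [|apply (Hds1 m1)].
      apply (proj2 (Hd m1)). exact Hm1. }
  assert (dinj : forall a b, d a = d b -> a = b).
  { intros a b E. destruct (wo_tri _ HwoM a b) as [A|[A|A]]; [|exact A|];
    apply dmono in A; rewrite E in A; exfalso; exact (wo_irrefl _ HwoK _ A). }
  assert (Sds : S ds).
  { split; [|split; [|split]].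
    - apply Hkmu. eapply (wo_trans _ HwoK); [apply (proj1 (Hd eps))|apply Hds1].
    - split.
      + exists (fun y => exists m, y = d m). split.
        * split. { intros y [m ->]. apply Hds1. }
          intros j Hj. destruct (lsub j Hj) as [m Hm]. exists (d m). eauto.
        * set (fi := fun y => match excluded_middle_informative (exists m, y = d m) with
             | left H => proj1_sig (constructive_indefinite_description _ H) | right _ => eps end).
          assert (fid : forall m, fi (d m) = m).
          { intro m. unfold fi. destruct (excluded_middle_informative _) as [H|H]; [|exfalso; eauto].
            destruct (constructive_indefinite_description _ H) as [n E]. simpl. symmetry. auto. }
          exists fi. split.
          { intros y y' [m ->] [m' ->] E. rewrite !fid in E. subst. reflexivity. }
          intro m. exists (d m). split; eauto.
      + intros Y [HY1 HY2].
        destruct (wf_rec_choice ltM HwoM k0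
          (fun m h y => Y y /\ ltK (d m) y /\ forall m', ltM m' m -> ltK (h m') y)) as [e He].
        { intros x h h' E b [A [B D]]. split; auto. split; auto. intros m' Hm'. rewrite <- E by exact Hm'. auto. }
        { intros m h IH.
          assert (Hn : forall m', exists n, ltM m' m -> h m' = d n \/ ltK (h m') (d n)).
          { intro m'. destruct (classic (ltM m' m)) as [Hm'|Hm']; [|exists eps; tauto].
            destruct (lsub (h m')) as [n Hn]; [apply HY1; exact (proj1 (IH m' Hm'))|]. eauto. }
          destruct (choice _ Hn) as [n Hn'].
          destruct (M_reg ltM HM HF m n) as [N0 HN0].
          destruct (ubM N0 m) as [N1 [HN1 HN2]].
          destruct (HY2 (d N1) (Hds1 N1)) as [y [Yy Hy]].
          exists y. split; [exact Yy|]. split.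
          - eapply (wo_lt_le _ HwoK); [apply dmono; exact HN2|]. destruct Hy; auto.
          - intros m' Hm'. eapply (wo_le_lt _ HwoK); [exact (Hn' m' Hm')|].
            eapply (wo_le_lt _ HwoK); [apply dle; apply (wo_not_lt _ HwoM); apply HN0; exact Hm'|].
            eapply (wo_lt_le _ HwoK); [apply dmono; exact HN1|]. destruct Hy; auto. }
        exists e. split; [intro m; exact (proj1 (He m))|].
        intros a b _ _ E. destruct (wo_tri _ HwoM a b) as [A|[A|A]]; [|exact A|]; exfalso.
        * pose proof (proj2 (proj2 (He b)) a A) as L. rewrite E in L. exact (wo_irrefl _ HwoK _ L).
        * pose proof (proj2 (proj2 (He a)) b A) as L. rewrite E in L. exact (wo_irrefl _ HwoK _ L).
    - apply (clos CE cE); [|exact HCE]. intro k1. split; [apply HcE'|]. split; [apply HcE'|]. apply HNext.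
    - intros x Hx. apply (clos (Cl x) (cl x)); [|exact (proj1 (HCl x Hx))].
      intro k1. split; [apply Hcl''; exact Hx|]. split; [apply Hcl''; exact Hx|]. apply HNext. exact Hx. }
  destruct (Hgam ds Sds) as [Hg1 Hg2].
  pose proof (Hbeta (gam ds) ds Sds eq_refl) as Lb.
  destruct (lsub _ Hg1) as [m Hm].
  destruct (M_nomax ltM HM HF eps Heps m) as [m1 Hm1].
  destruct (M_nomax ltM HM HF eps Heps m1) as [m2 Hm2].
  assert (L1 : ltK (gam ds) (d m1)) by (eapply (wo_le_lt _ HwoK); [exact Hm|apply dmono; exact Hm1]).
  assert (L2 : ltK (beta (gam ds)) ds).
  { eapply (wo_trans _ HwoK); [apply (proj2 (proj2 (proj2 (HNext (d m1))))); exact L1|].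
    eapply (wo_trans _ HwoK); [apply (proj2 (Hd m2)); exact Hm2|apply Hds1]. }
  exact (wo_asym _ HwoK _ _ Lb L2).
Qed.

End Core.

Theorem claim1p3 (M K P : Type) (ltM : M -> M -> Prop) (ltK : K -> K -> Prop)
  (leP : P -> P -> Prop) (e : P) (eps : M) :
  is_cardinal ltM -> mu_lt_mu_eq_mu ltM -> is_succ_card ltM ltK ->
  is_limit ltM eps -> forcing_notion leP e ->
  satisfies_star ltM ltK leP e eps ->
  @chain_condition M P leP.
Proof.
  intros HM HF HK Heps Hfn [s [Hna Hwin]].
  pose proof (proj1 HM) as HwoM. pose proof (proj1 HK) as HwoK.
  intros A Hanti. apply NNPP. intro NA.
  destruct (wf_rec_choice ltK HwoK e (fun k h b => A b /\ forall k', ltK k' k -> h k' <> b)) as [a Ha].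
  { intros x h h' E b [A1 A2]. split; auto. intros k' Hk'. rewrite <- E by exact Hk'. auto. }
  { intros k h _. apply NNPP. intro N.
    assert (Hc : forall b, exists k', A b -> ltK k' k /\ h k' = b).
    { intro b. destruct (classic (A b)) as [Ab|Ab]; [|exists k; tauto].
      apply NNPP. intro N2. apply N. exists b. split; [exact Ab|].
      intros k' Hk' E. apply N2. exists k'. auto. }
    destruct (choice _ Hc) as [c Hc'].
    destruct (proj1 (proj2 HK) k) as [g Hg].
    apply NA. exists (fun b => g (c b)). intros u v Au Av E.
    destruct (Hc' u Au) as [U1 U2]. destruct (Hc' v Av) as [V1 V2].
    rewrite <- U2, <- V2. f_equal. apply Hg; auto. }
  assert (ainj : forall k1 k2, ltK k1 k2 -> a k1 <> a k2).
  { intros k1 k2 L E. exact (proj2 (Ha k2) k1 L E). }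
  destruct (wo_least _ HwoM (fun _ => True) eps I) as [z0 [_ Hz0]].
  assert (z0min : forall x, ~ ltM x z0) by (intros x; apply Hz0; exact I).
  assert (z0eps : ltM z0 eps).
  { destruct (wo_tri _ HwoM z0 eps) as [A1|[A1|A1]]; [exact A1| |exfalso; exact (z0min _ A1)].
    subst. destruct Heps as [[x Hx] _]. exfalso. exact (z0min _ Hx). }
  set (Pz := fun z (h : M -> K -> P) (i : K) =>
        let q := fst (s z h) i in
        if excluded_middle_informative ((forall x, ~ ltM x z) /\ leP q (a i)) then a i else q).
  destruct (wf_rec_choice ltM HwoM (fun _ => e) (fun z h b => b = Pz z h)) as [p Hp].
  { intros x h h' E b ->. apply functional_extensionality. intro i. unfold Pz.
    rewrite (proj1 (Hna x h h' (fun y Hy i => f_equal (fun u => u i) (E y Hy)) i)). reflexivity. }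
  { intros x h _. eauto. }
  assert (clubT : club ltK (fun _ => True)).
  { split; [|auto]. intro j. destruct (K_nomax ltM ltK HM HF eps Heps HK j) as [c Hc]. eauto. }
  assert (HII : II_legal ltM ltK leP eps s p).
  { intros z _. exists (fun _ => True). split; [exact clubT|]. intros i _ _.
    rewrite (Hp z). unfold Pz. destruct (excluded_middle_informative _) as [[_ H]|_]; [exact H|].
    apply (proj1 Hfn). }
  destruct (Hwin p HII) as [HIl [E [[CE [HCE HCE']] HEw]]].
  assert (pz0 : forall i, p z0 i = a i).
  { intro i. rewrite (Hp z0). unfold Pz. destruct (excluded_middle_informative _) as [_|N]; [reflexivity|].
    exfalso. apply N. split; [exact z0min|].
    rewrite (proj1 (proj1 (HIl z0 z0eps) z0min i)). apply (proj2 (proj2 Hfn)). }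
  set (f := fun x i => snd (s x p) i).
  assert (HCl : forall x, exists C, ltM x eps -> club ltK C /\
              forall i, C i -> (exists k, ltK k i) -> ltK (f x i) i).
  { intro x. destruct (classic (ltM x eps)) as [Hx|Hx]; [|exists (fun _ => True); tauto].
    destruct (classic (exists y, ltM y x)) as [Hy|Hy].
    - destruct (proj2 (proj2 (HIl x Hx) Hy)) as [C [HC HC']]. exists C. intros _. split; [exact HC|].
      intros i Ci _. apply HC'. exact Ci.
    - assert (Hm : forall y, ~ ltM y x) by (intros y Ly; apply Hy; eauto).
      exists (fun _ => True). intros _. split; [exact clubT|]. intros i _ [k Hk].
      pose proof (proj2 (proj1 (HIl x Hx) Hm i)) as Hb. fold f in Hb.
      destruct (wo_tri _ HwoK (f x i) k) as [B|[B|B]].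
      + exact (wo_trans _ HwoK _ _ _ B Hk).
      + rewrite B. exact Hk.
      + exfalso. exact (Hb k B). }
  destruct (choice _ HCl) as [Cl HCl'].
  destruct (core ltM ltK HM HF eps Heps HK CE Cl f HCE HCl') as
    [i [j [Ci [Cj [Mi [Lij [Fi [Fj Eq]]]]]]]].
  destruct (HEw i j (HCE' i Ci Fi) (HCE' j Cj Fj) Mi Lij Fi Fj Eq) as [r Hr].
  destruct (Hr z0 z0eps) as [R1 R2]. rewrite !pz0 in R1, R2.
  apply (Hanti (a i) (a j) (proj1 (Ha i)) (proj1 (Ha j)) (ainj i j Lij)).
  eauto.
Qed.
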